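(* Let $g(x)=\sum_{k=0}^\infty a_k x^k$ be a real power series convergent for $x\in(-\varrho,\varrho)$, some $\varrho\in(0,\infty)$, and put $G(y)=g(1/y)$. Then for every real $y>1+\max\{1,1/\varrho\}$, $$(y+1)G(y)-yG(y-1)=a_0-\sum_{k=2}^\infty \frac{\sum_{i=1}^{k-1}\binom{k}{i-1}a_i+\bigl(\binom{k}{k-1}-1\bigr)a_k}{y^k},$$ the series being convergent. Consequently $\lim_{y\to\infty}\bigl((y+1)G(y)-yG(y-1)\bigr)=a_0$. In particular, $\lim_{y\to\infty}\Bigl(\frac{(y+1)^{y+1}}{y^y}-\frac{y^y}{(y-1)^{y-1}}\Bigr)=\mathrm{e}$.
   Context: $\mathrm{e}$ is the base of the natural logarithm; the special case corresponds to $g(x)=(1+x)^{1/x}$ (with value $\mathrm{e}$ at $0$), whose Maclaurin series converges on $(-1,1)$ and has constant term $\mathrm{e}$, so that $G(y)=(1+1/y)^y$. *)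

(* Defs.v *)
From Stdlib Require Import Reals.
Open Scope R_scope.

Definition G (g : R -> R) (y : R) : R := g (/ y).

(* Numerator of the k-th term, for k >= 2:
   sum_{i=1}^{k-1} C(k,i-1) a_i + (C(k,k-1) - 1) a_k.
   Written with j = i-1 ranging over 0..k-2. *)
Definition coef (a : nat -> R) (k : nat) : R :=
  sum_f_R0 (fun j => C k j * a (S j)) (k - 2) + (C k (k - 1) - 1) * a k.

Definition lim_at_infty (f : R -> R) (l : R) : Prop :=
  forall eps : R, eps > 0 -> exists M : R, forall y : R, y > M -> Rabs (f y - l) < eps.

(* Main.v *)
Require Import Defs.
From Stdlib Require Import Reals Lra Lia.
From Coquelicot Require Coquelicot.
Open Scope R_scope.

Lemma bounded_from (f : nat -> R) : forall N c,
  (forall n, (N <= n)%nat -> Rabs (f n) <= c) -> exists B, forall n, Rabs (f n) <= B.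
Proof.
  induction N; intros c H.
  - exists c. intros n. apply H. lia.
  - apply (IHN (Rmax c (Rabs (f N)))). intros n Hn.
    destruct (Nat.eq_dec n N) as [->|Hne].
    + apply Rmax_r.
    + eapply Rle_trans; [apply H; lia | apply Rmax_l].
Qed.

Lemma sum_terms_bounded f l : infinite_sum f l -> exists B, forall n, Rabs (f n) <= B.
Proof.
  intros H. destruct (H (1/2)) as [N HN]; [lra|].
  apply (bounded_from f (S N) 1). intros n Hn.
  destruct n as [|n]; [lia|].
  assert (E : f (S n) = sum_f_R0 f (S n) - sum_f_R0 f n) by (simpl; ring).
  rewrite E. pose proof (HN (S n) ltac:(lia)). pose proof (HN n ltac:(lia)).
  unfold Rdist in *. apply Rabs_def2 in H0. apply Rabs_def2 in H1.
  apply Rabs_le. lra.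
Qed.

Lemma le_eps A K : (forall eps, 0 < eps -> A <= K + eps) -> A <= K.
Proof.
  intros H. destruct (Rle_dec A K) as [h|h]; auto.
  specialize (H ((A-K)/2)). lra.
Qed.

Lemma sum_shift2 (f : nat -> R) N :
  sum_f_R0 f (S (S N)) = f 0%nat + f 1%nat + sum_f_R0 (fun k => f (k+2)%nat) N.
Proof.
  induction N; [simpl; ring|]. rewrite tech5, IHN, (tech5 _ N).
  replace (S (S (S N))) with (S N + 2)%nat by lia. ring.
Qed.

Lemma geom_le2 h N : 0 <= h <= 1/2 -> sum_f_R0 (fun k => h ^ k) N <= 2.
Proof.
  intros Hh. rewrite tech3 by lra.
  assert (0 <= h ^ S N) by (apply pow_le; lra).
  apply Rmult_le_reg_r with (1-h); [lra|].
  unfold Rdiv. rewrite Rmult_assoc, Rinv_l by lra. lra.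
Qed.

Lemma coef_bound (a : nat -> R) r1 B x k :
  0 < r1 -> (forall k, Rabs (a k * r1 ^ k) <= B) ->
  Rabs (a k * x ^ k) <= B * (Rabs x / r1) ^ k.
Proof.
  intros Hr HB. specialize (HB k).
  rewrite Rabs_mult in *. rewrite <- RPow_abs in *.
  rewrite (Rabs_right r1) in HB by lra.
  replace (Rabs x) with (r1 * (Rabs x / r1)) at 1 by (field; lra).
  rewrite Rpow_mult_distr.
  assert (0 <= (Rabs x / r1) ^ k) by (apply pow_le; unfold Rdiv; apply Rmult_le_pos;
    [apply Rabs_pos | left; apply Rinv_0_lt_compat; lra]).
  rewrite <- Rmult_assoc. apply Rmult_le_compat_r; auto.
Qed.

Lemma quad_bound (a : nat -> R) (g : R -> R) r1 B x :
  0 < r1 -> (forall k, Rabs (a k * r1 ^ k) <= B) ->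
  infinite_sum (fun k => a k * x ^ k) (g x) -> Rabs x <= r1/2 ->
  Rabs (g x - a 0%nat - a 1%nat * x) <= 2 * B / (r1*r1) * (x * x).
Proof.
  intros Hr HB Hs Hx.
  set (h := Rabs x / r1).
  assert (Hh : 0 <= h <= 1/2).
  { unfold h. split. unfold Rdiv; apply Rmult_le_pos; [apply Rabs_pos|left; apply Rinv_0_lt_compat; lra].
    apply Rmult_le_reg_r with r1; [lra|]. unfold Rdiv; rewrite Rmult_assoc, Rinv_l by lra. lra. }
  assert (HB0 : 0 <= B) by (eapply Rle_trans; [apply Rabs_pos|apply (HB 0%nat)]).
  assert (Hpart : forall N, Rabs (sum_f_R0 (fun k => a k * x ^ k) (S (S N)) - a 0%nat - a 1%nat * x)
      <= 2 * B / (r1*r1) * (x * x)).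
  { intros N. rewrite sum_shift2. simpl. 
    replace (a 0%nat * 1 + a 1%nat * (x * 1) + sum_f_R0 (fun k : nat => a (k + 2)%nat * x ^ (k + 2)) N -
     a 0%nat - a 1%nat * x) with (sum_f_R0 (fun k : nat => a (k + 2)%nat * x ^ (k + 2)) N) by ring.
    eapply Rle_trans. apply sum_f_R0_triangle.
    eapply Rle_trans. apply sum_Rle. intros n _. apply (coef_bound a r1 B x (n+2) Hr HB).
    fold h.
    assert (E : sum_f_R0 (fun i => B * h ^ (i + 2)) N = (B * h * h) * sum_f_R0 (fun k => h ^ k) N).
    { rewrite scal_sum. apply sum_eq. intros i _. rewrite pow_add. simpl. ring. }
    rewrite E.
    assert (Hhx : h * h = (x * x) / (r1 * r1)).
    { unfold h. replace (x*x) with (Rabs x * Rabs x). field. lra.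
      rewrite <- Rabs_mult. apply Rabs_right. nra. }
    assert (0 <= B * h * h) by (apply Rmult_le_pos; [apply Rmult_le_pos|]; lra).
    eapply Rle_trans. apply Rmult_le_compat_l. auto. apply geom_le2. auto.
    replace (B * h * h * 2) with (2 * B * (h*h)) by ring. rewrite Hhx. unfold Rdiv. lra. }
  apply le_eps. intros eps He.
  destruct (Hs eps He) as [N HN]. specialize (HN (S (S N)) ltac:(lia)).
  specialize (Hpart N). unfold Rdist in HN.
  set (P := sum_f_R0 (fun k => a k * x ^ k) (S (S N))) in *.
  replace (g x - a 0%nat - a 1%nat * x) with ((P - a 0%nat - a 1%nat * x) - (P - g x)) by ring.
  eapply Rle_trans. apply Rabs_triang. rewrite Rabs_Ropp. lra.
Qed.

Definition fF (y : R) := exp ((y+1) * ln (y+1) - y * ln y).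

Lemma ln_le_m1 z : 0 < z -> ln z <= z - 1.
Proof. intros Hz. pose proof (exp_ineq1_le (ln z)). rewrite exp_ln in H; lra. Qed.

Module P3D.
Import Coquelicot.Coquelicot.
Lemma fF_deriv c : 0 < c -> derivable_pt_lim fF c (fF c * (ln (c+1) - ln c)).
Proof.
  intros Hc. apply is_derive_Reals. unfold fF.
  auto_derive. { repeat split; lra. }
  unfold Rminus; field; lra.
Qed.
End P3D.


Lemma exp_le_mono x y : x <= y -> exp x <= exp y.
Proof. intros [H|H]; [left; apply exp_increasing; auto | subst; lra]. Qed.

Lemma fF_der_bound c : 0 < c ->
  Rabs (fF c * (ln (c+1) - ln c) - exp 1) <= exp 1 / c.
Proof.
  intros Hc. set (L := ln (c+1) - ln c).
  assert (HeL : exp L = (c+1)/c).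
  { unfold L, Rminus. rewrite exp_plus, exp_Ropp, !exp_ln by lra. field; lra. }
  assert (HemL : exp (-L) = c/(c+1)).
  { rewrite exp_Ropp, HeL. field; lra. }
  assert (H1 : L <= 1/c).
  { pose proof (exp_ineq1_le L). rewrite HeL in H.
    assert ((c+1)/c = 1 + 1/c) by (field; lra). lra. }
  assert (H2 : 1/(c+1) <= L).
  { pose proof (exp_ineq1_le (-L)). rewrite HemL in H.
    assert (c/(c+1) = 1 - 1/(c+1)) by (field; lra). lra. }
  assert (HF : fF c = (c+1) * exp (c*L)).
  { unfold fF. replace ((c + 1) * ln (c + 1) - c * ln c) with (ln (c+1) + c * L)
      by (unfold L; ring). rewrite exp_plus, exp_ln by lra. reflexivity. }
  rewrite HF.
  assert (HcL1 : c * L <= 1).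
  { apply Rmult_le_compat_l with (r:=c) in H1; [|lra].
    replace (c * (1/c)) with 1 in H1 by (field; lra). lra. }
  assert (HcL2 : c/(c+1) <= c*L).
  { apply Rmult_le_compat_l with (r:=c) in H2; [|lra].
    replace (c * (1/(c+1))) with (c/(c+1)) in H2 by (field; lra). lra. }
  assert (HL1 : (c+1) * L <= 1 + 1/c).
  { apply Rmult_le_compat_l with (r:=c+1) in H1; [|lra].
    replace ((c+1) * (1/c)) with (1 + 1/c) in H1 by (field; lra). lra. }
  assert (HL2 : 1 <= (c+1) * L).
  { apply Rmult_le_compat_l with (r:=c+1) in H2; [|lra].
    replace ((c+1) * (1/(c+1))) with 1 in H2 by (field; lra). lra. }
  assert (HE1 : exp (c*L) <= exp 1) by (apply exp_le_mono; lra).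
  assert (HE2 : exp 1 * (c * L) <= exp (c*L)).
  { replace (exp (c*L)) with (exp 1 * exp (c*L - 1))
      by (rewrite <- exp_plus; f_equal; ring).
    apply Rmult_le_compat_l; [left; apply exp_pos|].
    pose proof (exp_ineq1_le (c*L - 1)). lra. }
  pose proof (exp_pos 1) as He. pose proof (exp_pos (c*L)) as He'.
  assert (Hc1 : 0 < 1/c) by (apply Rdiv_lt_0_compat; lra).
  assert (Hc2 : c/(c+1) = 1 - 1/(c+1)) by (field; lra).
  assert (Hc3 : 1/(c+1) <= 1/c).
  { apply Rmult_le_reg_l with (c*(c+1)); [nra|].
    replace (c*(c+1)*(1/(c+1))) with c by (field; lra).
    replace (c*(c+1)*(1/c)) with (c+1) by (field; lra). lra. }
  replace ((c + 1) * exp (c * L) * L) with (((c+1)*L) * exp (c*L)) by ring.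
  apply Rabs_le. split.
  -
    assert (exp 1 * (c/(c+1)) <= (c+1)*L*exp (c*L)).
    { apply Rle_trans with (1 * exp (c*L)); [|apply Rmult_le_compat_r; lra].
      assert (exp 1 * (c/(c+1)) <= exp 1 * (c*L)) by (apply Rmult_le_compat_l; lra). lra. }
    rewrite Hc2 in H. unfold Rdiv in *. nra.
  - assert ((c+1)*L*exp (c*L) <= (1 + 1/c) * exp 1).
    { apply Rle_trans with ((1+1/c) * exp (c*L)).
      apply Rmult_le_compat_r; lra. apply Rmult_le_compat_l; lra. }
    unfold Rdiv in *. nra.
Qed.

Lemma Rpower_quot y : 0 < y ->
  Rpower (y + 1) (y + 1) / Rpower y y = fF y.
Proof.
  intros Hy. unfold Rpower, fF, Rdiv. unfold Rminus.
  rewrite exp_plus, exp_Ropp. ring_simplify. reflexivity.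
Qed.

Lemma part3 : lim_at_infty
       (fun y => Rpower (y + 1) (y + 1) / Rpower y y - Rpower y y / Rpower (y - 1) (y - 1))
       (exp 1).
Proof.
  intros eps Heps. exists (2 + exp 1 / eps).
  intros y Hy.
  assert (He : 0 < exp 1) by apply exp_pos.
  assert (Hd : 0 < exp 1 / eps) by (apply Rdiv_lt_0_compat; lra).
  rewrite Rpower_quot by lra.
  replace (Rpower y y / Rpower (y - 1) (y - 1)) with (fF (y-1)).
  2:{ rewrite <- Rpower_quot by lra. f_equal; f_equal; ring. }
  destruct (MVT_cor2 fF (fun c => fF c * (ln (c+1) - ln c)) (y-1) y) as [c [Hc1 Hc2]].
  lra. intros c Hc. apply P3D.fF_deriv. lra.
  rewrite Hc1. replace (y - (y-1)) with 1 by ring. rewrite Rmult_1_r.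
  eapply Rle_lt_trans. apply fF_der_bound. lra.
  apply Rmult_lt_reg_r with (c / eps). apply Rdiv_lt_0_compat; lra.
  replace (exp 1 / c * (c / eps)) with (exp 1 / eps) by (field; lra).
  replace (eps * (c / eps)) with c by (field; lra). lra.
Qed.

Lemma part2 (a : nat -> R) (rho : R) (g : R -> R)
  (hrho : 0 < rho)
  (hg : forall x : R, Rabs x < rho -> infinite_sum (fun k => a k * x ^ k) (g x)) :
  lim_at_infty (fun y => (y + 1) * G g y - y * G g (y - 1)) (a 0%nat).
Proof.
  set (r1 := rho/2).
  assert (Hr1 : 0 < r1) by (unfold r1; lra).
  destruct (sum_terms_bounded _ _ (hg r1 ltac:(rewrite Rabs_right; unfold r1; lra))) as [B HB].
  assert (HB0 : 0 <= B) by (eapply Rle_trans; [apply Rabs_pos|apply (HB 0%nat)]).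
  set (K := 2 * B / (r1*r1)).
  assert (HK : 0 <= K) by (unfold K; unfold Rdiv; apply Rmult_le_pos; [lra|left; apply Rinv_0_lt_compat; nra]).
  set (C := 6*K + Rabs (a 1%nat) + 1).
  assert (HC : 0 < C) by (unfold C; pose proof (Rabs_pos (a 1%nat)); lra).
  intros eps Heps.
  exists (3 + 2/r1 + C/eps). intros y Hy.
  assert (H2r : 0 < 2/r1) by (apply Rdiv_lt_0_compat; lra).
  assert (HCe : 0 < C/eps) by (apply Rdiv_lt_0_compat; lra).
  set (t := /y). set (u := /(y-1)).
  assert (Ht : 0 < t) by (apply Rinv_0_lt_compat; lra).
  assert (Hu : 0 < u) by (apply Rinv_0_lt_compat; lra).
  assert (Hyt : y * t = 1) by (unfold t; field; lra).
  assert (Hyu : (y-1) * u = 1) by (unfold u; field; lra).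
  assert (Hur : u <= r1/2).
  { apply Rmult_le_reg_l with (y-1); [lra|]. rewrite Hyu.
    assert (y - 1 >= 2/r1) by lra.
    apply Rmult_le_reg_l with (2/r1); [lra|].
    replace (2/r1 * ((y-1)*(r1/2))) with (y-1) by (field; lra). lra. }
  assert (Htu : t <= u) by nra.
  assert (Hu2t : u <= 2*t) by nra.
  assert (Hu12 : u <= 1/2) by nra.
  assert (Hrr : r1 < rho) by (unfold r1; lra).
  assert (Et := quad_bound a g r1 B t Hr1 HB (hg t ltac:(rewrite Rabs_right; lra))
     ltac:(rewrite Rabs_right; lra)).
  assert (Eu := quad_bound a g r1 B u Hr1 HB (hg u ltac:(rewrite Rabs_right; lra))
     ltac:(rewrite Rabs_right; lra)).
  fold K in Et, Eu.
  unfold G. fold t. fold u.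
  set (et := g t - a 0%nat - a 1%nat * t) in *.
  set (eu := g u - a 0%nat - a 1%nat * u) in *.
  replace ((y + 1) * g t - y * g u - a 0%nat) with
    ((y+1) * et - y * eu - a 1%nat * (t * u)).
  2:{ assert (Hyu' : y*u = 1+u) by nra. assert (Htu' : t*u = u - t) by nra.
      apply Rminus_diag_uniq.
      replace ((y + 1) * et - y * eu - a 1%nat * (t * u) - ((y + 1) * g t - y * g u - a 0%nat))
        with (a 1%nat * (- (y*t) - t + y*u - t*u)) by (unfold et, eu; ring).
      rewrite Hyt, Hyu', Htu'. ring. }
  assert (A1 : Rabs ((y+1)*et) <= 2*K*t).
  { rewrite Rabs_mult, Rabs_right by lra.
    apply Rle_trans with ((y+1) * (K * (t*t))). apply Rmult_le_compat_l; lra.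
    assert ((y+1)*t <= 2) by nra.
    replace ((y+1) * (K * (t*t))) with ((K*t)*((y+1)*t)) by ring.
    replace (2*K*t) with ((K*t)*2) by ring. apply Rmult_le_compat_l; nra. }
  assert (A2 : Rabs (y*eu) <= 4*K*t).
  { rewrite Rabs_mult, Rabs_right by lra.
    apply Rle_trans with (y * (K * (u*u))). apply Rmult_le_compat_l; lra.
    assert (y*u <= 2) by nra.
    replace (y * (K * (u*u))) with ((K*u)*(y*u)) by ring.
    apply Rle_trans with ((K*u)*2). apply Rmult_le_compat_l; nra. nra. }
  assert (A3 : Rabs (a 1%nat * (t*u)) <= Rabs (a 1%nat) * t).
  { rewrite Rabs_mult, (Rabs_right (t*u)) by nra.
    apply Rmult_le_compat_l. apply Rabs_pos. nra. }
  assert (Hfin : C * t < eps).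
  { apply Rmult_lt_reg_l with y; [lra|]. replace (y * (C*t)) with (C*(y*t)) by ring. rewrite Hyt, Rmult_1_r.
    assert (C/eps < y) by lra.
    apply Rmult_lt_compat_r with (r:=eps) in H; [|lra].
    unfold Rdiv in H. rewrite Rmult_assoc, Rinv_l in H by lra. lra. }
  unfold C in Hfin.
  eapply Rle_lt_trans. apply Rabs_triang.
  eapply Rle_lt_trans. apply Rplus_le_compat_r. apply Rabs_triang.
  rewrite !Rabs_Ropp. nra.
Qed.

Fixpoint binom (n k : nat) : nat :=
  match n, k with
  | _, O => 1%nat
  | O, S _ => 0%nat
  | S n', S k' => (binom n' k' + binom n' (S k'))%nat
  end.

Lemma binom_n0 n : binom n 0 = 1%nat.
Proof. destruct n; auto. Qed.

Lemma binom_lt n k : (n < k)%nat -> binom n k = 0%nat.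
Proof.
  revert k; induction n; intros k H; destruct k; simpl; try lia; auto.
  rewrite !IHn by lia. auto.
Qed.

Lemma binom_nn n : binom n n = 1%nat.
Proof. induction n; simpl; auto. rewrite IHn, binom_lt by lia. auto. Qed.

Lemma C_n0 n : C n 0 = 1.
Proof. unfold C. rewrite Nat.sub_0_r. simpl. field. apply INR_fact_neq_0. Qed.

Lemma C_nn n : C n n = 1.
Proof. unfold C. rewrite Nat.sub_diag. simpl. field. apply INR_fact_neq_0. Qed.

Lemma binom_C n k : (k <= n)%nat -> INR (binom n k) = C n k.
Proof.
  revert k; induction n; intros k Hk.
  - destruct k; [|lia]. simpl. rewrite C_n0. auto.
  - destruct k. + simpl. rewrite C_n0. auto.
    + simpl. rewrite plus_INR.
      destruct (Nat.eq_dec k n) as [->|Hne].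
      * rewrite binom_nn, binom_lt by lia. rewrite C_nn. simpl. ring.
      * rewrite !IHn by lia. apply pascal. lia.
Qed.

Lemma binom_Sn n : INR (binom (S n) n) = INR (S n).
Proof.
  induction n; [simpl; ring|].
  change (binom (S (S n)) (S n)) with (binom (S n) n + binom (S n) (S n))%nat.
  rewrite plus_INR, IHn, binom_nn. rewrite !S_INR. simpl. ring.
Qed.

Definition Q (t : R) (j N : nat) : R := sum_f_R0 (fun k => INR (binom k j) * t ^ k) N.

Lemma Q_0S t N : Q t 0 (S N) = 1 + t * Q t 0 N.
Proof.
  unfold Q. rewrite decomp_sum by lia. simpl pred. rewrite scal_sum.
  f_equal. simpl; ring. apply sum_eq. intros i _. rewrite !binom_n0. simpl. ring.
Qed.

Lemma Q_SS t j N : Q t (S j) (S N) = t * Q t j N + t * Q t (S j) N.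
Proof.
  unfold Q. rewrite decomp_sum by lia. simpl pred. rewrite !scal_sum, <- sum_plus.
  simpl binom at 1. simpl INR at 1. rewrite Rmult_0_l, Rplus_0_l.
  apply sum_eq. intros i _. simpl binom. rewrite plus_INR. simpl pow. ring.
Qed.

Lemma Q_j0 t j : Q t j 0 = INR (binom 0 j).
Proof. unfold Q. simpl. ring. Qed.

Lemma Q_big t N : Q t (S N) N = 0.
Proof.
  unfold Q. rewrite (sum_eq _ (fun _ => 0)). 
  induction N; simpl; [ring|]. 
  clear. induction N; simpl; [ring| lra].
  intros i Hi. rewrite binom_lt by lia. simpl. ring.
Qed.

Definition Qs (y u : R) (j : nat) : R := y * u ^ (S j).
Definition E (y u t : R) (j N : nat) : R := Qs y u j - Q t j N.

Lemma E_0S y u t N : y * t = 1 -> u = t + t * u -> E y u t 0 (S N) = t * E y u t 0 N.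
Proof.
  intros H1 H2. unfold E. rewrite Q_0S. unfold Qs. simpl.
  assert (y*u = 1 + u). { rewrite H2 at 1. replace (y*(t+t*u)) with ((y*t)*(1+u)) by ring. rewrite H1. ring. }
  replace (y * (u*1)) with (y*u) by ring. rewrite H.
  replace (t * (1 + u - Q t 0 N)) with (t + t*u - t * Q t 0 N) by ring. rewrite <- H2. ring.
Qed.

Lemma E_SS y u t j N : y * t = 1 -> u = t + t * u ->
  E y u t (S j) (S N) = t * E y u t j N + t * E y u t (S j) N.
Proof.
  intros H1 H2. unfold E. rewrite Q_SS. unfold Qs.
  replace (y * u ^ S (S j)) with (y * u ^ S j * u) by (simpl; ring).
  rewrite H2 at 2. simpl. ring.
Qed.

Lemma E_nonneg y u t : 0 < t -> 0 < u -> 0 < y -> y * t = 1 -> u = t + t * u ->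
  forall N j, 0 <= E y u t j N.
Proof.
  intros Ht Hu Hy H1 H2. induction N; intros j.
  - unfold E. rewrite Q_j0. unfold Qs. destruct j.
    + simpl. assert (y*u = 1 + u). { rewrite H2 at 1. replace (y*(t+t*u)) with ((y*t)*(1+u)) by ring. rewrite H1. ring. }
      rewrite Rmult_1_r, H. lra.
    + rewrite binom_lt by lia. simpl INR. assert (0 < u ^ S (S j)) by (apply pow_lt; lra). nra.
  - destruct j.
    + rewrite E_0S by auto. specialize (IHN 0%nat). nra.
    + rewrite E_SS by auto. pose proof (IHN j). pose proof (IHN (S j)). nra.
Qed.

Lemma E_big y u t N : E y u t (S N) N = Qs y u (S N).
Proof. unfold E. rewrite Q_big. ring. Qed.

Lemma sum_scal_l (f : nat -> R) c N : sum_f_R0 (fun i => c * f i) N = c * sum_f_R0 f N.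
Proof. induction N; simpl; [ring|]. rewrite IHN. ring. Qed.

Definition V (y u t s : R) (N : nat) : R := sum_f_R0 (fun j => s ^ j * E y u t j N) N.

Lemma V_S y u t s N : 0 < t -> y * t = 1 -> u = t + t * u ->
  V y u t s (S N) = (t * (1 + s)) * V y u t s N + u * (s * u) ^ (S N).
Proof.
  intros Ht H1 H2. unfold V.
  rewrite decomp_sum by lia. simpl pred.
  rewrite E_0S by auto.
  rewrite (sum_eq _ (fun i => (s * t) * (s ^ i * E y u t i N) + t * (s ^ (S i) * E y u t (S i) N))).
  2:{ intros i _. rewrite E_SS by auto. simpl. ring. }
  rewrite sum_plus, !sum_scal_l.
  assert (Hsh : sum_f_R0 (fun i => s ^ S i * E y u t (S i) N) N =
     sum_f_R0 (fun j => s ^ j * E y u t j N) N - E y u t 0 N + s ^ (S N) * E y u t (S N) N).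
  { pose proof (decomp_sum (fun j => s ^ j * E y u t j N) (S N) ltac:(lia)) as D.
    simpl pred in D. rewrite tech5 in D. simpl pow in D at 1. lra. }
  rewrite Hsh, E_big. unfold Qs.
  replace (y * u ^ S (S N)) with ((y * t) * u ^ S (S N) / t) by (field; lra).
  rewrite H1, Rpow_mult_distr. simpl pow. field. lra.
Qed.

Lemma Q_S t j N : Q t j (S N) = Q t j N + INR (binom (S N) j) * t ^ (S N).
Proof. unfold Q. rewrite tech5. reflexivity. Qed.

Lemma swap t (b : nat -> R) N :
  sum_f_R0 (fun k => t ^ k * sum_f_R0 (fun j => INR (binom k j) * b j) k) N
  = sum_f_R0 (fun j => b j * Q t j N) N.
Proof.
  induction N.
  - simpl. unfold Q. simpl. ring.
  - rewrite tech5, IHN, (tech5 (fun j => b j * Q t j (S N))).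
    rewrite (sum_eq (fun j => b j * Q t j (S N)) (fun j => b j * Q t j N + t ^ S N * (INR (binom (S N) j) * b j))).
    2:{ intros i _. rewrite Q_S. ring. }
    rewrite sum_plus, sum_scal_l, Q_S, Q_big, (tech5 (fun j => INR (binom (S N) j) * b j)).
    ring.
Qed.

Lemma rec_geom (v : nat -> R) w q c : 0 <= w < 1 -> 0 <= q < 1 -> 0 <= c ->
  (forall N, v (S N) = w * v N + c * q ^ (S N)) ->
  exists A m, 0 <= m < 1 /\ forall N, v N <= A * m ^ N.
Proof.
  intros Hw Hq Hc Hrec.
  set (m := (1 + Rmax w q)/2).
  assert (Hm1 : w < m /\ q < m /\ m < 1).
  { unfold m. pose proof (Rmax_l w q). pose proof (Rmax_r w q).
    destruct (Rmax_Rle w q (Rmax w q)) as [_ _].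
    assert (Rmax w q < 1) by (unfold Rmax; destruct Rle_dec; lra). lra. }
  set (A := Rmax (v 0%nat) (c / (m - w))).
  exists A, m. split; [lra|].
  assert (HA : c / (m-w) <= A) by apply Rmax_r.
  assert (HA' : c * m <= A * (m - w)).
  { apply Rmult_le_compat_r with (r := m - w) in HA; [|lra].
    unfold Rdiv in HA. rewrite Rmult_assoc, Rinv_l in HA by lra. nra. }
  induction N.
  - simpl. rewrite Rmult_1_r. apply Rmax_l.
  - rewrite Hrec.
    assert (q ^ S N <= m ^ S N) by (apply pow_incr; lra).
    assert (0 <= m ^ N) by (apply pow_le; lra).
    apply Rle_trans with (w * (A * m ^ N) + c * m ^ S N).
    + apply Rplus_le_compat. apply Rmult_le_compat_l; lra. apply Rmult_le_compat_l; lra.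
    + simpl. nra.
Qed.

Lemma cv_geom_dom (x : nat -> R) K m : 0 <= m < 1 ->
  (forall N, Rabs (x N) <= K * m ^ N) -> Un_cv x 0.
Proof.
  intros Hm H eps Heps.
  assert (HK : 0 <= K) by (specialize (H 0%nat); simpl in H; pose proof (Rabs_pos (x 0%nat)); lra).
  destruct (pow_lt_1_zero m ltac:(rewrite Rabs_right; lra) (eps / (K+1))) as [N HN].
  apply Rdiv_lt_0_compat; lra.
  exists N. intros n Hn. unfold Rdist. rewrite Rminus_0_r.
  specialize (HN n Hn). rewrite Rabs_right in HN by (apply Rle_ge, pow_le; lra).
  eapply Rle_lt_trans. apply H.
  apply Rle_lt_trans with ((K+1) * m ^ n). 
  assert (0 <= m ^ n) by (apply pow_le; lra). nra.
  apply Rmult_lt_compat_l with (r := K+1) in HN; [|lra].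
  replace ((K+1) * (eps / (K+1))) with eps in HN by (field; lra). lra.
Qed.

Definition X t (b : nat -> R) k := t ^ k * sum_f_R0 (fun j => INR (binom k j) * b j) k.
Definition P (a : nat -> R) N x := sum_f_R0 (fun k => a k * x ^ k) N.

Lemma term_eq (a : nat -> R) t y m : 0 < t -> y = / t ->
  coef a (m + 2) / y ^ (m + 2) =
  X t (fun j => a (S j)) (m+2) - a (m+2)%nat * t ^ (m+2) - y * (a (m+3)%nat * t ^ (m+3)).
Proof.
  intros Ht Hy. unfold coef, X.
  replace (m + 2 - 2)%nat with m by lia. replace (m + 2 - 1)%nat with (S m) by lia.
  replace (m+2)%nat with (S (S m)) by lia. replace (m+3)%nat with (S (S (S m))) by lia.
  rewrite (tech5 _ (S m)), (tech5 _ m).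
  rewrite (sum_eq (fun j => INR (binom (S (S m)) j) * a (S j)) (fun j => C (S (S m)) j * a (S j))).
  2:{ intros i Hi. rewrite binom_C by lia. auto. }
  rewrite binom_nn, binom_Sn, <- (binom_C (S (S m)) (S m)) by lia. rewrite binom_Sn.
  rewrite Hy. unfold Rdiv. rewrite <- pow_inv, Rinv_inv. change (INR 1) with 1. simpl pow. field. lra.
Qed.

Lemma T_eq (a : nat -> R) t y n : 0 < t -> y = / t ->
  sum_f_R0 (fun m => coef a (m + 2) / y ^ (m + 2)) n =
  sum_f_R0 (X t (fun j => a (S j))) (n+2) - P a (n+2) t - y * P a (n+3) t + a 0%nat + y * a 0%nat.
Proof.
  intros Ht Hy. induction n.
  - transitivity (coef a (0+2)/y^(0+2)); [reflexivity|]. rewrite (term_eq a t y 0) by auto. unfold P, X. simpl.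
    rewrite Hy. field. lra.
  - rewrite tech5, IHn, (term_eq a t y (S n)) by auto.
    replace (S n + 2)%nat with (S (n+2)) by lia.
    replace (S n + 3)%nat with (S (n+3)) by lia.
    unfold P. rewrite !(tech5 _ (n+2)), (tech5 _ (n+3)). ring.
Qed.

Lemma cv_const (c : R) : Un_cv (fun _ => c) c.
Proof. intros eps He. exists 0%nat. intros. unfold Rdist. rewrite Rminus_diag, Rabs_R0. lra. Qed.

Lemma part1 (a : nat -> R) (rho : R) (g : R -> R)
  (hrho : 0 < rho)
  (hg : forall x : R, Rabs x < rho -> infinite_sum (fun k => a k * x ^ k) (g x)) :
  (forall y : R, y > 1 + Rmax 1 (/ rho) ->
     exists S : R,
       infinite_sum (fun n => coef a (n + 2) / y ^ (n + 2)) S /\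
       (y + 1) * G g y - y * G g (y - 1) = a 0%nat - S).
Proof.
  intros y Hy.
  assert (Hy2 : y > 2) by (pose proof (Rmax_l 1 (/rho)); lra).
  assert (Hyr : y - 1 > / rho) by (pose proof (Rmax_r 1 (/rho)); lra).
  set (t := / y). set (u := / (y - 1)).
  assert (Ht : 0 < t) by (apply Rinv_0_lt_compat; lra).
  assert (Hu : 0 < u) by (apply Rinv_0_lt_compat; lra).
  assert (Hyt : y * t = 1) by (unfold t; field; lra).
  assert (Hyu : (y-1) * u = 1) by (unfold u; field; lra).
  assert (Hyt' : y = / t) by (unfold t; rewrite Rinv_inv; auto).
  assert (Hut : u = t + t * u) by nra.
  assert (Hur : u < rho).
  { unfold u. rewrite <- (Rinv_inv rho). apply Rinv_lt_contravar; [|lra].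
    apply Rmult_lt_0_compat; [apply Rinv_0_lt_compat; lra | lra]. }
  assert (Htu : t < u) by nra.
  set (r1 := (u + rho)/2).
  assert (Hr1 : u < r1 < rho) by (unfold r1; lra).
  destruct (sum_terms_bounded _ _ (hg r1 ltac:(rewrite Rabs_right; lra))) as [B HB].
  assert (HB0 : 0 <= B) by (eapply Rle_trans; [apply Rabs_pos|apply (HB 0%nat)]).
  set (s := / r1).
  assert (Hs : 0 < s) by (apply Rinv_0_lt_compat; lra).
  assert (Hsr : s * r1 = 1) by (unfold s; field; lra).
  assert (Hak : forall k, Rabs (a k) <= B * s ^ k).
  { intros k. specialize (HB k). rewrite Rabs_mult, <- RPow_abs, (Rabs_right r1) in HB by lra.
    replace (Rabs (a k)) with (Rabs (a k) * r1 ^ k * s ^ k).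
    2:{ rewrite Rmult_assoc, <- Rpow_mult_distr, (Rmult_comm r1), Hsr, pow1. ring. }
    apply Rmult_le_compat_r. apply pow_le; lra. exact HB. }
  set (w := t * (1 + s)). set (q := s * u).
  assert (Hw : 0 <= w < 1).
  { unfold w. split; [nra|].
    (* t(1+s) < 1 <=> r1 + 1 < y r1 *)
    assert (r1 * (y - 1) > 1) by nra.
    assert (y * r1 > r1 + 1) by nra.
    apply Rmult_lt_reg_l with (y * r1); [nra|].
    replace (y * r1 * (t * (1 + s))) with ((y*t) * (r1 + s * r1)) by ring.
    rewrite Hyt, Hsr. lra. }
  assert (Hq : 0 <= q < 1).
  { unfold q. split; [nra|]. apply Rmult_lt_reg_l with r1; [lra|].
    replace (r1 * (s*u)) with ((s*r1)*u) by ring. rewrite Hsr. lra. }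
  destruct (rec_geom (V y u t s) w q u Hw Hq ltac:(lra)) as [A [m [Hm HV]]].
  { intros N. apply V_S; auto. }
  set (b := fun j => a (S j)).
  set (Sw := fun N => sum_f_R0 (X t b) N).
  assert (HSw : Un_cv Sw (y * (g u - a 0%nat))).
  { assert (Herr : Un_cv (fun N => y * (P a (S N) u - a 0%nat) - Sw N) 0).
    { apply (cv_geom_dom _ (B * s * A) m Hm). intros N.
      assert (Hd : y * (P a (S N) u - a 0%nat) - Sw N = sum_f_R0 (fun j => b j * E y u t j N) N).
      { unfold Sw, X. rewrite swap. unfold P. rewrite decomp_sum by lia. simpl pred.
        unfold E. rewrite (sum_eq (fun j => b j * (Qs y u j - Q t j N)) (fun j => b j * Qs y u j + (- 1) * (b j * Q t j N))).
        2:{ intros; ring. }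
        rewrite sum_plus, sum_scal_l.
        replace (y * (a 0%nat * u ^ 0 + sum_f_R0 (fun i : nat => a (S i) * u ^ S i) N - a 0%nat))
          with (sum_f_R0 (fun j => b j * Qs y u j) N).
        ring. rewrite pow_O, Rmult_1_r. replace (a 0%nat + sum_f_R0 (fun i : nat => a (S i) * u ^ S i) N - a 0%nat) with (sum_f_R0 (fun i : nat => a (S i) * u ^ S i) N) by ring.
        rewrite <- sum_scal_l. apply sum_eq. intros i _. unfold b, Qs. ring. }
      rewrite Hd. eapply Rle_trans. apply sum_f_R0_triangle.
      apply Rle_trans with (sum_f_R0 (fun j => (B * s) * (s ^ j * E y u t j N)) N).
      { apply sum_Rle. intros j _. rewrite Rabs_mult.
        pose proof (E_nonneg y u t Ht Hu ltac:(lra) Hyt Hut N j).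
        rewrite (Rabs_right (E y u t j N)) by lra.
        replace (B * s * (s ^ j * E y u t j N)) with ((B * s ^ (S j)) * E y u t j N) by (simpl; ring).
        apply Rmult_le_compat_r; auto. apply Hak. }
      rewrite sum_scal_l. fold (V y u t s N). replace (B * s * A * m ^ N) with ((B*s)*(A*m^N)) by ring.
      apply Rmult_le_compat_l; [nra|]. apply HV. }
    assert (HP : Un_cv (fun N => P a (S N) u) (g u)).
    { apply Un_cv_ext with (fun N => P a (N+1) u). intros; f_equal; lia.
      apply CV_shift' with (f := fun N => P a N u).
      exact (hg u ltac:(rewrite Rabs_right; lra)). }
    assert (H3 := CV_minus _ _ _ _ (CV_mult _ _ _ _ (cv_const y) (CV_minus _ _ _ _ HP (cv_const (a 0%nat)))) Herr).
    rewrite Rminus_0_r in H3. apply Un_cv_ext with (2 := H3). intros; simpl; ring. }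
  assert (HPt : Un_cv (fun N => P a N t) (g t)).
  { exact (hg t ltac:(rewrite Rabs_right; lra)). }
  exists (a 0%nat - ((y + 1) * g t - y * g u)). split.
  2:{ unfold G. fold t. fold u. ring. }
  unfold infinite_sum. fold (Un_cv (sum_f_R0 (fun n : nat => coef a (n + 2) / y ^ (n + 2)))
     (a 0%nat - ((y + 1) * g t - y * g u))).
  apply Un_cv_ext with (fun n => Sw (n+2)%nat - P a (n+2) t - y * P a (n+3) t + a 0%nat + y * a 0%nat).
  { intros n. rewrite (T_eq a t y n Ht Hyt'). reflexivity. }
  assert (H1 := CV_shift' _ 2 _ HSw).
  assert (H2 := CV_shift' _ 2 _ HPt).
  assert (H3 := CV_shift' _ 3 _ HPt).
  assert (H4 := CV_plus _ _ _ _ (CV_plus _ _ _ _ (CV_minus _ _ _ _ (CV_minus _ _ _ _ H1 H2)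
     (CV_mult _ _ _ _ (cv_const y) H3)) (cv_const (a 0%nat))) (cv_const (y * a 0%nat))).
  replace (a 0%nat - ((y + 1) * g t - y * g u)) with
    (y * (g u - a 0%nat) - g t - y * g t + a 0%nat + y * a 0%nat) by ring.
  exact H4.
Qed.

Theorem mainTheorem4 (a : nat -> R) (rho : R) (g : R -> R)
  (hrho : 0 < rho)
  (hg : forall x : R, Rabs x < rho -> infinite_sum (fun k => a k * x ^ k) (g x)) :
  (forall y : R, y > 1 + Rmax 1 (/ rho) ->
     exists S : R,
       infinite_sum (fun n => coef a (n + 2) / y ^ (n + 2)) S /\
       (y + 1) * G g y - y * G g (y - 1) = a 0%nat - S)
  /\ lim_at_infty (fun y => (y + 1) * G g y - y * G g (y - 1)) (a 0%nat)
  /\ lim_at_infty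
       (fun y => Rpower (y + 1) (y + 1) / Rpower y y - Rpower y y / Rpower (y - 1) (y - 1))
       (exp 1).
Proof.
  split; [exact (part1 a rho g hrho hg)|]. split; [exact (part2 a rho g hrho hg)|]. apply part3.
Qed.
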